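(* Let $n\ge 5$ and let $\mathcal{H}$ be a Berge-$K_4$-saturated $3$-graph on $n$ vertices. (i) If $u,v\in V(\mathcal{H})$ are distinct and $(u,v)$ is good, then for every witness (distinct vertices $x,y\notin\{u,v\}$ and distinct hyperedges $e_{ux},e_{uy},e_{vx},e_{vy},e_{xy}$ containing the respective pairs) every hyperedge of $\mathcal{H}$ containing both $u$ and $v$ is among $e_{ux},e_{uy},e_{vx},e_{vy},e_{xy}$. Moreover, $d_{\mathcal{H}}(u,v)\le 2$ and $d_{\mathcal{H}}(w)\ge 3$ for every $w\in N_{\mathcal{H}}(u,v)$. (ii) Let $v_1v_2v_3\in E(\mathcal{H})$ with $d_{\mathcal{H}}(v_1)\le d_{\mathcal{H}}(v_2)\le d_{\mathcal{H}}(v_3)$. If $d_{\mathcal{H}}(v_1)\le 2$, then $(v_2,v_3)$ is bad. If $d_{\mathcal{H}}(v_1)\le d_{\mathcal{H}}(v_2)\le 2$, then $(v_1,v_2)$, $(v_1,v_3)$ and $(v_2,v_3)$ are bad. If $d_{\mathcal{H}}(v_1)\le d_{\mathcal{H}}(v_2)\le d_{\mathcal{H}}(v_3)\le 2$, then $(v_1,u)$, $(v_2,u)$ and $(v_3,u)$ are bad for every $u\in V(\mathcal{H})\setminus\{v_1,v_2,v_3\}$.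
   Context: A $3$-graph has all hyperedges of size $3$. A $3$-graph contains a Berge-$K_4$ if there are $4$ distinct vertices and $6$ distinct hyperedges, one containing each of the $6$ pairs of these vertices. $\mathcal{H}$ is Berge-$K_4$-saturated if it contains no Berge-$K_4$ but adding any $3$-set not already a hyperedge creates a Berge-$K_4$. For distinct vertices $u,v$, the pair $(u,v)$ is good if adding the new edge $\{u,v\}$ creates a Berge-$K_4$, i.e. there exist distinct vertices $x,y\notin\{u,v\}$ and five distinct hyperedges $e_{ux},e_{uy},e_{vx},e_{vy},e_{xy}$ of $\mathcal{H}$ with $e_{ab}\supseteq\{a,b\}$; otherwise $(u,v)$ is bad. $d_{\mathcal{H}}(w)$ is the number of hyperedges containing $w$; $N_{\mathcal{H}}(u,v)=\{w: uvw\in E(\mathcal{H})\}$ and $d_{\mathcal{H}}(u,v)=|N_{\mathcal{H}}(u,v)|$. *)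

(* Defs.v *)
From mathcomp Require Import all_boot.

Set Implicit Arguments. Unset Strict Implicit. Unset Printing Implicit Defensive.

Section Berge.
Variable T : finType.

Definition uniform3 (E : {set {set T}}) : Prop :=
  forall e, e \in E -> #|e| = 3.

Definition has_berge_K4 (E : {set {set T}}) : Prop :=
  exists (a b c d : T) (eab eac ead ebc ebd ecd : {set T}),
    [/\ uniq [:: a; b; c; d],
        [/\ eab \in E, eac \in E, ead \in E, ebc \in E & [/\ ebd \in E & ecd \in E]],
        uniq [:: eab; eac; ead; ebc; ebd; ecd] &
        [/\ [/\ a \in eab & b \in eab], [/\ a \in eac & c \in eac],
            [/\ a \in ead & d \in ead], [/\ b \in ebc & c \in ebc] &
            [/\ [/\ b \in ebd & d \in ebd] & [/\ c \in ecd & d \in ecd]]]].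

Definition berge_K4_saturated (E : {set {set T}}) : Prop :=
  ~ has_berge_K4 E /\
  forall S : {set T}, #|S| = 3 -> S \notin E -> has_berge_K4 (S |: E).

Definition good_witness (E : {set {set T}}) (u v x y : T)
    (eux euy evx evy exy : {set T}) : Prop :=
  [/\ uniq [:: u; v; x; y],
      [/\ eux \in E, euy \in E, evx \in E, evy \in E & exy \in E],
      uniq [:: eux; euy; evx; evy; exy] &
      [/\ [/\ u \in eux & x \in eux], [/\ u \in euy & y \in euy],
          [/\ v \in evx & x \in evx], [/\ v \in evy & y \in evy] &
          [/\ x \in exy & y \in exy]]].

Definition good (E : {set {set T}}) (u v : T) : Prop :=
  exists x y eux euy evx evy exy, good_witness E u v x y eux euy evx evy exy.

Definition bad (E : {set {set T}}) (u v : T) : Prop := ~ good E u v.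

Definition deg (E : {set {set T}}) (w : T) : nat := #|[set e in E | w \in e]|.

Definition coN (E : {set {set T}}) (u v : T) : {set T} :=
  [set w | [set u; v; w] \in E].

Definition codeg (E : {set {set T}}) (u v : T) : nat := #|coN E u v|.

End Berge.

(* Main.v *)
Require Import Defs.
From mathcomp Require Import all_boot.

Set Implicit Arguments.
Section S.
Variable T : finType.
Implicit Types E : {set {set T}}.

Lemma in3 (a b c z : T) : z \in [set a; b; c] -> z != a -> z != b -> z = c.
Proof. by rewrite !inE => /orP[/orP[/eqP->|/eqP->]|/eqP->]; rewrite ?eqxx. Qed.

Lemma deg3 E a e1 e2 e3 : e1 \in E -> e2 \in E -> e3 \in E ->
  a \in e1 -> a \in e2 -> a \in e3 -> e1 != e2 -> e1 != e3 -> e2 != e3 ->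
  3 <= deg E a.
Proof.
move=> h1 h2 h3 a1 a2 a3 n12 n13 n23.
have U : uniq [:: e1; e2; e3] by rewrite /= !inE !negb_or n12 n13 n23.
rewrite /deg; have -> : 3 = size [:: e1; e2; e3] by [].
rewrite -(card_uniqP U); apply: subset_leq_card; apply/subsetP => e.
by rewrite !inE => /or3P[/eqP->|/eqP->|/eqP->]; apply/andP.
Qed.

Record wfacts E (u v x y : T) (eux euy evx evy exy : {set T}) : Prop := WF {
  uv : u != v; ux : u != x; uy : u != y; vx : v != x; vy : v != y; xy : x != y;
  i1 : eux \in E; i2 : euy \in E; i3 : evx \in E; i4 : evy \in E; i5 : exy \in E;
  n12 : eux != euy; n13 : eux != evx; n14 : eux != evy; n15 : eux != exy;
  n23 : euy != evx; n24 : euy != evy; n25 : euy != exy;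
  n34 : evx != evy; n35 : evx != exy; n45 : evy != exy;
  m1 : u \in eux; m2 : x \in eux; m3 : u \in euy; m4 : y \in euy;
  m5 : v \in evx; m6 : x \in evx; m7 : v \in evy; m8 : y \in evy;
  m9 : x \in exy; m10 : y \in exy }.

Lemma witE E u v x y eux euy evx evy exy :
  good_witness E u v x y eux euy evx evy exy -> wfacts E u v x y eux euy evx evy exy.
Proof.
case=> Hu [h1 h2 h3 h4 h5] Hue [[a1 a2] [b1 b2] [c1 c2] [d1 d2] [f1 f2]].
move: Hu Hue; rewrite /= !inE !negb_or.
case/and4P => /and3P[p1 p2 p3] /andP[p4 p5] p6 _.
case/and5P => /and4P[q1 q2 q3 q4] /and3P[q5 q6 q7] /andP[q8 q9] q10 _.
by constructor.
Qed.

Lemma inlist E u v x y eux euy evx evy exy e : ~ has_berge_K4 E ->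
  good_witness E u v x y eux euy evx evy exy ->
  e \in E -> u \in e -> v \in e -> e \in [:: eux; euy; evx; evy; exy].
Proof.
move=> NK W He ue ve; apply/negPn/negP => Hn; apply: NK.
case: W => Hu [h1 h2 h3 h4 h5] Hue [[a1 a2] [b1 b2] [c1 c2] [d1 d2] [f1 f2]].
exists u, v, x, y, e, eux, euy, evx, evy, exy; split=> //.
by rewrite cons_uniq Hn Hue.
Qed.

Lemma wdeg E u v x y eux euy evx evy exy :
  good_witness E u v x y eux euy evx evy exy -> 3 <= deg E x /\ 3 <= deg E y.
Proof.
move/witE=> F; split.
  exact: (deg3 (i1 F) (i3 F) (i5 F) (m2 F) (m6 F) (m9 F) (n13 F) (n15 F) (n35 F)).
exact: (deg3 (i2 F) (i4 F) (i5 F) (m4 F) (m8 F) (m10 F) (n24 F) (n25 F) (n45 F)).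
Qed.

Lemma coN_xy E u v x y eux euy evx evy exy w : ~ has_berge_K4 E ->
  good_witness E u v x y eux euy evx evy exy ->
  w \in coN E u v -> w = x \/ w = y.
Proof.
move=> NK W; rewrite /coN inE => Hw.
have := inlist NK W Hw; rewrite !inE !eqxx ?orbT => /(_ isT isT) H5.
have F := witE W; move: H5.
have xu : x != u by rewrite eq_sym (ux F).
have xv : x != v by rewrite eq_sym (vx F).
have yu : y != u by rewrite eq_sym (uy F).
have yv : y != v by rewrite eq_sym (vy F).
case/orP=> [/eqP Heq|/orP[/eqP Heq|/orP[/eqP Heq|/orP[/eqP Heq|/eqP Heq]]]]; subst.
- by left; apply/esym/(in3 (m2 F)).
- by right; apply/esym/(in3 (m4 F)).
- by left; apply/esym/(in3 (m6 F)).
- by right; apply/esym/(in3 (m8 F)).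
- have e1 := in3 (m9 F) xu xv; have e2 := in3 (m10 F) yu yv.
  by move: (xy F); rewrite e1 e2 eqxx.
Qed.

Lemma maxdeg E u v x y eux euy evx evy exy e : ~ has_berge_K4 E ->
  good_witness E u v x y eux euy evx evy exy ->
  e \in E -> u \in e -> v \in e -> 3 <= deg E u \/ 3 <= deg E v.
Proof.
move=> NK W He ue ve; have := inlist NK W He ue ve.
have F := witE W.
rewrite !inE; case/orP=> [/eqP Heq|/orP[/eqP Heq|/orP[/eqP Heq|/orP[/eqP Heq|/eqP Heq]]]]; subst.
- by right; apply: (deg3 He (i3 F) (i4 F) ve (m5 F) (m7 F) (n13 F) (n14 F) (n34 F)).
- by right; apply: (deg3 He (i3 F) (i4 F) ve (m5 F) (m7 F) (n23 F) (n24 F) (n34 F)).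
- by left; apply: (deg3 He (i1 F) (i2 F) ue (m1 F) (m3 F) _ _ (n12 F)); rewrite eq_sym ?(n13 F) ?(n23 F).
- by left; apply: (deg3 He (i1 F) (i2 F) ue (m1 F) (m3 F) _ _ (n12 F)); rewrite eq_sym ?(n14 F) ?(n24 F).
- by left; apply: (deg3 He (i1 F) (i2 F) ue (m1 F) (m3 F) _ _ (n12 F)); rewrite eq_sym ?(n15 F) ?(n25 F).
Qed.

Lemma lowdeg E a u x y eax eay eux euy exy f :
  good_witness E a u x y eax eay eux euy exy ->
  f \in E -> a \in f -> deg E a <= 2 ->
  (forall z, z \in f -> deg E z <= 2) -> False.
Proof.
move=> W Hf af da Hz.
have [dx dy] := wdeg W.
have F := witE W.
have : (f == eax) || (f == eay).
  apply/negPn/negP; rewrite negb_or => /andP[p q].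
  have := deg3 Hf (i1 F) (i2 F) af (m1 F) (m3 F) p q (n12 F).
  by rewrite leqNgt ltnS da.
case/orP => /eqP Heq; subst.
- by have := Hz x (m2 F); rewrite leqNgt dx.
- by have := Hz y (m4 F); rewrite leqNgt dy.
Qed.

Lemma set3C (a b c : T) : [set b; c; a] = [set a; b; c].
Proof. by apply/setP => z; rewrite !inE; case: (z == a); case: (z == b); case: (z == c). Qed.

End S.
Unset Implicit Arguments.

Theorem fact3p1 (n : nat) (T : finType) (E : {set {set T}}) :
  5 <= n -> #|T| = n -> uniform3 E -> berge_K4_saturated E ->
  (* (i) *)
  (forall u v : T, u != v -> good E u v ->
     (forall x y eux euy evx evy exy,
        good_witness E u v x y eux euy evx evy exy ->
        forall e, e \in E -> u \in e -> v \in e ->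
          e \in [:: eux; euy; evx; evy; exy]) /\
     codeg E u v <= 2 /\
     (forall w, w \in coN E u v -> 3 <= deg E w)) /\
  (* (ii) *)
  (forall v1 v2 v3 : T, [set v1; v2; v3] \in E ->
     deg E v1 <= deg E v2 -> deg E v2 <= deg E v3 ->
     (deg E v1 <= 2 -> bad E v2 v3) /\
     (deg E v2 <= 2 -> [/\ bad E v1 v2, bad E v1 v3 & bad E v2 v3]) /\
     (deg E v3 <= 2 ->
        forall u : T, u \notin [set v1; v2; v3] ->
          [/\ bad E v1 u, bad E v2 u & bad E v3 u])).
Proof.
move=> _ _ _ [NK _].
have coNdeg : forall u v w, good E u v -> w \in coN E u v -> 3 <= deg E w.
  move=> u v w [x [y [eux [euy [evx [evy [exy W]]]]]]] Hw.
  have [dx dy] := wdeg W.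
  by case: (coN_xy NK W Hw) => ->.
split.
  move=> u v _ G; split; first by move=> x y eux euy evx evy exy W e He ue ve; exact: (inlist NK W He ue ve).
  split; last by move=> w; apply: coNdeg.
  case: G => [x [y [eux [euy [evx [evy [exy W]]]]]]].
  rewrite /codeg; apply: (@leq_trans #|[set x; y]|); last first.
    by rewrite cards2; case: (x != y).
  apply: subset_leq_card; apply/subsetP => w Hw.
  by case: (coN_xy NK W Hw) => ->; rewrite !inE eqxx ?orbT.
move=> v1 v2 v3 He d12 d23.
have c1 : v1 \in coN E v2 v3 by rewrite inE set3C.
have c2' : v2 \in coN E v1 v3.
  rewrite inE; suff -> : [set v1; v3; v2] = [set v1; v2; v3] by [].
  by apply/setP => z; rewrite !inE; case: (z == v1); case: (z == v2); case: (z == v3).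
split.
  by move=> d1 G; have := coNdeg _ _ _ G c1; rewrite leqNgt ltnS d1.
split.
  move=> d2; have d1 := leq_trans d12 d2; split.
  - case=> [x [y [eux [euy [evx [evy [exy W]]]]]]].
    have [] := maxdeg NK W He; rewrite ?inE ?eqxx ?orbT // => h.
      by move: h; rewrite leqNgt ltnS d1.
    by move: h; rewrite leqNgt ltnS d2.
  - by move=> G; have := coNdeg _ _ _ G c2'; rewrite leqNgt ltnS d2.
  - by move=> G; have := coNdeg _ _ _ G c1; rewrite leqNgt ltnS d1.
move=> d3 u _.
have d2 := leq_trans d23 d3; have d1 := leq_trans d12 d2.
have Hz : forall z, z \in [set v1; v2; v3] -> deg E z <= 2.
  by move=> z; rewrite !inE => /orP[/orP[]|] /eqP->.
split; case=> [x [y [eux [euy [evx [evy [exy W]]]]]]];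
  apply: (lowdeg W He _ _ Hz); rewrite ?inE ?eqxx ?orbT //.
Qed.
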